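(* Let $p$ be an odd prime, $m\in\mathbb Z_p$ with $m\not\equiv0,\pm1\pmod p$. Then $$\sum_{k=0}^{[p/4]}\binom{4k}{2k}\Big(-\frac m{4(m-1)^2}\Big)^k\equiv\frac1{m+1}\Big(\frac{m-1}p\Big)\Big\{m\Big(\frac mp\Big)+\Big(\frac{-1}p\Big)\Big\}\pmod p$$ and $$\sum_{k=0}^{[p/4]}\binom{4k}{2k}\Big(-\frac{(m-1)^2}{64m}\Big)^k\equiv\begin{cases}\frac1{m+1}\big(m+\big(\frac mp\big)\big)m^{\frac{p-1}4}\pmod p&\text{if }4\mid p-1,\\ \frac1{m+1}\big(\big(\frac mp\big)+1\big)m^{\frac{p+1}4}\pmod p&\text{if }4\mid p-3.\end{cases}$$
   Context: $[x]$ is the greatest integer $\le x$; $\mathbb Z_p$ is the set of rational numbers whose denominator is not divisible by $p$; $(\frac{\cdot}{p})$ is the Legendre symbol. *)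

(* Defs.v *)
From HB Require Import structures.
From mathcomp Require Import all_boot all_order all_algebra.
Set Implicit Arguments. Unset Strict Implicit. Unset Printing Implicit Defensive.
Import Order.TTheory GRing.Theory Num.Theory.
Local Open Scope ring_scope.

Definition in_Zp (p : nat) (x : rat) : bool := ~~ (p%:Z %| denq x)%Z.

Definition congp (p : nat) (x y : rat) : Prop := in_Zp p ((x - y) / p%:R).

Definition legendreQ (p : nat) (x : rat) : rat :=
  let a : 'F_p := ratr x in
  if a == 0 then 0
  else if [exists b : 'F_p, b ^+ 2 == a] then 1 else -1.

(* Main.v *)
Require Import Defs.
From HB Require Import structures.
From mathcomp Require Import all_boot all_order all_algebra all_field.
From mathcomp Require Import zify ring lra.
Set Implicit Arguments. Unset Strict Implicit. Unset Printing Implicit Defensive.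
Import Order.TTheory GRing.Theory Num.Theory.
Local Open Scope ring_scope.

Section Core.
Variable K : fieldType.
Variable p : nat.
Hypothesis pK : p \in [pchar K].
Hypothesis op : odd p.
Let h := (p %/ 2)%N.
Lemma p_eq : (p = (2 * h).+1)%N. Proof. rewrite /h; lia. Qed.

Lemma frob1 (x : K) : (1 + x) ^+ p = 1 + x ^+ p.
Proof.
have := pFrobenius_autD_comm pK (commr1 x).
rewrite !pFrobenius_autE expr1n.
by move=> H; rewrite addrC H addrC.
Qed.

Lemma natK_neq0 n : (0 < n < p)%N -> (n%:R : K) != 0.
Proof.
move=> /andP[n0 np]; rewrite -(dvdn_pcharf pK); apply/negP=> /dvdn_leq.
by move=> /(_ n0); rewrite leqNgt np.
Qed.

Lemma binom_central j : (j <= h)%N ->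
  ('C(2 * j, j))%:R = (-4) ^+ j * ('C(h, j))%:R :> K.
Proof.
elim: j => [|j IH] hj; first by rewrite muln0 !bin0 expr0 mul1r.
have hj' : (j <= h)%N by lia.
have nz : ((j.+1)%:R : K) != 0 by apply: natK_neq0; move: p_eq; lia.
apply: (mulfI nz).
have A := mul_bin_diag (2 * j.+1) j.
have B := mul_bin_diag ((2 * j).+1) j.
have eA : ((2 * j.+1).-1 = (2 * j).+1)%N by lia.
have eC : ((2 * j).+1 - j = j.+1)%N by lia.
rewrite eA in A.
have C : 'C((2 * j).+1, j.+1) = 'C((2 * j).+1, j).
  by rewrite -[in RHS]bin_sub ?eC //; lia.
simpl in B.
have e1 : (j.+1 * 'C(2 * j.+1, j.+1) = 2 * ((2 * j).+1 * 'C(2 * j, j)))%N.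
  rewrite B -A C; lia.
rewrite -natrM e1 !natrM IH // [RHS]mulrCA -natrM mul_bin_left natrM natrB //.
have hp : ((2 * h).+1%:R : K) = 0 by rewrite -p_eq; exact: pcharf0 pK.
apply/eqP; rewrite -subr_eq0; apply/eqP.
transitivity (((2 * h).+1%:R : K) * ((-4) ^+ j * ('C(h, j))%:R * 2)); last by rewrite hp mul0r.
rewrite exprS -[((2 * j).+1)%:R]natr1 -[((2 * h).+1)%:R]natr1 !natrM. ring.
Qed.

Lemma pair_sum (R : nmodType) (f : nat -> R) q :
  \sum_(0 <= i < (2 * q.+1)%N) f i = \sum_(0 <= k < q.+1) (f (2 * k)%N + f (2 * k).+1).
Proof.
elim: q => [|q IH]; first by rewrite big_nat1 muln1 big_nat_recr //= big_nat1.
rewrite (big_nat_recr q.+1) //= -IH.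
have -> : (2 * q.+2 = (2 * q.+1).+1.+1)%N by lia.
by rewrite big_nat_recr //= big_nat_recr //= addrA.
Qed.

Lemma even_sum (y : K) n q : (n = 2 * q \/ n = (2 * q).+1)%N ->
  2 * \sum_(0 <= k < q.+1) ('C(n, 2 * k))%:R * y ^+ (2 * k) = (1 + y) ^+ n + (1 - y) ^+ n.
Proof.
move=> hn.
rewrite [1 + y]addrC [1 - y]addrC !exprD1n -big_split /=.
pose f i := (y ^+ i + (- y) ^+ i) *+ 'C(n, i).
transitivity (\sum_(i < n.+1) f i); last by apply: eq_bigr => i _; rewrite /f mulrnDl.
rewrite -(big_mkord xpredT f).
have -> : \sum_(0 <= i < n.+1) f i = \sum_(0 <= i < (2 * q.+1)%N) f i.
  case: hn => hn; last by rewrite hn; congr (\sum_(0 <= i < _) _); lia.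
  have -> : (2 * q.+1 = (2 * q).+2)%N by lia.
  rewrite [in RHS]big_nat_recr //= {3}/f bin_small ?mulr0n ?addr0 ?hn //.
rewrite pair_sum big_distrr /=; apply: eq_bigr => k _.
have e : (- y) ^+ (2 * k) = y ^+ (2 * k) by rewrite !exprM sqrrN.
rewrite /f !exprS e mulNr addrN mul0rn addr0 mulrnDl -(mulr_natl (y ^+ (2 * k))); ring.
Qed.


Lemma p_prime : prime p. Proof. exact: pcharf_prime pK. Qed.
Lemma two_neq0 : (2 : K) != 0.
Proof.
have := p_prime; have := op; move=> o pp.
apply: natK_neq0; have := prime_gt1 pp; case: p pp o => [|[|[|n]]] //=.
Qed.

Lemma four_neq0 : (4 : K) != 0.
Proof. by have := mulf_neq0 two_neq0 two_neq0; rewrite -natrM. Qed.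

Lemma sixtyfour_neq0 : (64 : K) != 0.
Proof. by have := mulf_neq0 (mulf_neq0 four_neq0 four_neq0) four_neq0; rewrite -!natrM. Qed.

Lemma negXp (x : K) : (- x) ^+ p = - x ^+ p.
Proof. by rewrite exprNn -signr_odd op expr1 mulN1r. Qed.

Lemma frobB (x : K) : (1 - x) ^+ p = 1 - x ^+ p.
Proof. by rewrite frob1 negXp. Qed.

Lemma pow2h (u : K) : u != 0 -> u ^+ (2 * h) = u ^+ p / u.
Proof. by move=> u0; rewrite p_eq exprS [u * _]mulrC mulfK. Qed.

Lemma sp_eq (s : K) : s ^+ p = (s ^+ 2) ^+ h * s.
Proof. by rewrite p_eq exprSr exprM. Qed.

Lemma hq : (h = 2 * (p %/ 4) \/ h = (2 * (p %/ 4)).+1)%N.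
Proof. rewrite /h; lia. Qed.

Lemma four_k k : (4 * k = 2 * (2 * k))%N. Proof. by rewrite mulnA. Qed.
Lemma k_le k : (k < (p %/ 4).+1)%N -> (2 * k <= h)%N.
Proof. move=> hk; have := hq; clear -hk; lia. Qed.

Lemma core1 (M s : K) : s ^+ 2 = - M -> M != 0 -> M != 1 -> M != -1 ->
  (M - 1) ^+ h * (M - 1) ^+ h = 1 ->
  ((- M) ^+ h = 1 \/ (- M) ^+ h = -1) ->
  \sum_(0 <= k < (p %/ 4).+1) ('C(4 * k, 2 * k))%:R * (- (M / (4 * (M - 1) ^+ 2))) ^+ k
  = (M + 1)^-1 * (M - 1) ^+ h * (M * M ^+ h + (-1) ^+ h).
Proof.
move=> hs M0 M1 Mm1 hb he.
have two := two_neq0.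
have M10 : M - 1 != 0 by rewrite subr_eq0.
have M1' : M + 1 != 0 by rewrite -[1]opprK subr_eq0.
have s0 : s != 0 by apply: contra M0 => /eqP s0; rewrite -oppr_eq0 -hs s0 expr0n.
have s1 : 1 - s != 0.
  rewrite subr_eq0; apply: contra Mm1 => /eqP e.
  by apply/eqP; rewrite -[M]opprK -hs -e expr1n.
have s2 : 1 + s != 0.
  rewrite -[s]opprK subr_eq0; apply: contra Mm1 => /eqP e.
  by apply/eqP; rewrite -[M]opprK -hs -sqrrN -e expr1n.
pose y := 2 * s / (M - 1).
have hy2 : (-4) ^+ 2 * (- (M / (4 * (M - 1) ^+ 2))) = y ^+ 2.
  rewrite /y; have hM : M = - s ^+ 2 by rewrite hs opprK.
  move: M10; rewrite hM => M10; field; by rewrite M10 four_neq0.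
transitivity (\sum_(0 <= k < (p %/ 4)%N.+1) ('C(h, 2 * k))%:R * y ^+ (2 * k)).
  apply: eq_big_nat => k /andP[_ hk].
rewrite four_k (binom_central (k_le hk)).
  by rewrite [y ^+ _]exprM -hy2 exprMn -exprM [RHS]mulrCA mulrA.
apply: (mulfI two); rewrite (even_sum _ hq).
have hM : M = - s ^+ 2 by rewrite hs opprK.
have e1 : 1 + y = - (1 - s) ^+ 2 / (M - 1).
  rewrite /y; move: M10; rewrite hM => M10; field; by rewrite M10.
have e2 : 1 - y = - (1 + s) ^+ 2 / (M - 1).
  rewrite /y; move: M10; rewrite hM => M10; field; by rewrite M10.
have hsp : s ^+ p = (- M) ^+ h * s by rewrite sp_eq hs.
rewrite e1 e2 !expr_div_n (exprNn ((1 - s) ^+ 2)) (exprNn ((1 + s) ^+ 2)) -!exprM !pow2h // frobB frob1 hsp.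
have hc : M ^+ h = (-1) ^+ h * (- M) ^+ h.
  by rewrite (exprNn M) mulrA -exprMn mulN1r opprK expr1n mul1r.
rewrite hc.
have b0 : (M - 1) ^+ h != 0 by apply/eqP => b0; move: hb; rewrite b0 mul0r => /eqP; rewrite eq_sym oner_eq0.
have hbi : ((M - 1) ^+ h)^-1 = (M - 1) ^+ h by apply: (mulfI b0); rewrite mulfV // hb.
rewrite hbi.
move: he b0; set a := (-1) ^+ h; set e := (- M) ^+ h; set b := (M - 1) ^+ h.
clearbody a e b => he b0.
move: M1' M10; rewrite hM => M1' M10.
case: he => ->; field; by rewrite ?M1' ?M10 ?s1 ?s2 ?two.
Qed.


Lemma common2 (M s : K) : s ^+ 2 = - M -> M != 0 -> M != 1 -> M != -1 ->
  2 * \sum_(0 <= k < (p %/ 4).+1) ('C(4 * k, 2 * k))%:R * (- ((M - 1) ^+ 2 / (64 * M))) ^+ k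
  = ((-1) ^+ h * ((1 - (- M) ^+ h * s) / (1 - s)) + (1 + (- M) ^+ h * s) / (1 + s))
     / (2 * s) ^+ h.
Proof.
move=> hs M0 M1 Mm1.
have two := two_neq0.
have M10 : M - 1 != 0 by rewrite subr_eq0.
have s0 : s != 0 by apply: contra M0 => /eqP s0; rewrite -oppr_eq0 -hs s0 expr0n.
have s1 : 1 - s != 0.
  rewrite subr_eq0; apply: contra Mm1 => /eqP e.
  by apply/eqP; rewrite -[M]opprK -hs -e expr1n.
have s2 : 1 + s != 0.
  rewrite -[s]opprK subr_eq0; apply: contra Mm1 => /eqP e.
  by apply/eqP; rewrite -[M]opprK -hs -sqrrN -e expr1n.
have hM : M = - s ^+ 2 by rewrite hs opprK.
pose y := (M - 1) / (2 * s).
have hy2 : (-4) ^+ 2 * (- ((M - 1) ^+ 2 / (64 * M))) = y ^+ 2.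
  rewrite /y; move: M0; rewrite hM => M0; field.
  by rewrite s0 two M0 sixtyfour_neq0.
rewrite (_ : \sum_(0 <= k < (p %/ 4)%N.+1) _ = \sum_(0 <= k < (p %/ 4)%N.+1) ('C(h, 2 * k))%:R * y ^+ (2 * k)).
  rewrite (even_sum _ hq).
  have e1 : 1 + y = - (1 - s) ^+ 2 / (2 * s).
    rewrite /y hM; field; by rewrite s0 two.
  have e2 : 1 - y = (1 + s) ^+ 2 / (2 * s).
    rewrite /y hM; field; by rewrite s0 two.
  have hsp : s ^+ p = (- M) ^+ h * s by rewrite sp_eq hs.
  rewrite e1 e2 !expr_div_n (exprNn ((1 - s) ^+ 2)) -!exprM !pow2h // frobB frob1 hsp.
  by rewrite mulrA -mulrDl.
apply: eq_big_nat => k /andP[_ hk].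
rewrite four_k (binom_central (k_le hk)).
by rewrite [y ^+ _]exprM -hy2 exprMn -exprM [RHS]mulrCA mulrA.
Qed.


Lemma nz_facts (M s : K) : s ^+ 2 = - M -> M != 0 -> M != 1 -> M != -1 ->
  [/\ s != 0, 1 - s != 0, 1 + s != 0, M - 1 != 0 & M + 1 != 0].
Proof.
move=> hs M0 M1 Mm1; split.
- by apply: contra M0 => /eqP s0; rewrite -oppr_eq0 -hs s0 expr0n.
- rewrite subr_eq0; apply: contra Mm1 => /eqP e.
  by apply/eqP; rewrite -[M]opprK -hs -e expr1n.
- rewrite -[s]opprK subr_eq0; apply: contra Mm1 => /eqP e.
  by apply/eqP; rewrite -[M]opprK -hs -sqrrN -e expr1n.
- by rewrite subr_eq0.
- by rewrite -[1]opprK subr_eq0.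
Qed.

Lemma core2 (M s : K) r : h = (2 * r)%N -> s ^+ 2 = - M -> M != 0 -> M != 1 -> M != -1 ->
  2 ^+ h * (-1) ^+ r = 1 :> K ->
  ((- M) ^+ h = 1 \/ (- M) ^+ h = -1) ->
  \sum_(0 <= k < (p %/ 4).+1) ('C(4 * k, 2 * k))%:R * (- ((M - 1) ^+ 2 / (64 * M))) ^+ k
  = (M + 1)^-1 * (M + M ^+ h) * M ^+ r.
Proof.
move=> hr hs M0 M1 Mm1 h2 he.
have two := two_neq0.
have [s0 s1 s2 M10 M1'] := nz_facts hs M0 M1 Mm1.
apply: (mulfI two); rewrite (common2 hs) //.
have ha : (-1) ^+ h = 1 :> K by rewrite hr exprM sqrrN expr1n expr1n.
have h2s : (2 * s) ^+ h = M ^+ r.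
  rewrite exprMn {2}hr exprM hs (exprNn M) mulrA h2 mul1r //.
have hc : M ^+ h = (- M) ^+ h by rewrite exprNn ha mul1r.
have hen : (- M) ^+ h = M ^+ r * M ^+ r by rewrite hr exprM sqrrN -exprMn expr2.
have n0 : M ^+ r != 0 by rewrite expf_neq0.
have hni : (M ^+ r)^-1 = (- M) ^+ h * M ^+ r.
  apply: (mulfI n0); rewrite mulfV // mulrCA -hen.
  by case: he => ->; rewrite ?mulr1 ?mulrNN ?mulr1.
rewrite ha h2s hc mul1r mulrC hni.
move: he n0; set e := (- M) ^+ h; set n := M ^+ r; clearbody e n => he n0.
have hM : M = - s ^+ 2 by rewrite hs opprK.
move: M1' M10; rewrite hM => M1' M10.
case: he => ->; field; by rewrite ?M1' ?M10 ?s1 ?s2 ?two.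
Qed.

Lemma core3 (M s : K) r : h = (2 * r).+1%N -> s ^+ 2 = - M -> M != 0 -> M != 1 -> M != -1 ->
  2 ^+ h * (-1) ^+ r = -1 :> K ->
  ((- M) ^+ h = 1 \/ (- M) ^+ h = -1) ->
  \sum_(0 <= k < (p %/ 4).+1) ('C(4 * k, 2 * k))%:R * (- ((M - 1) ^+ 2 / (64 * M))) ^+ k
  = (M + 1)^-1 * (M ^+ h + 1) * M ^+ r.+1.
Proof.
move=> hr hs M0 M1 Mm1 h2 he.
have two := two_neq0.
have [s0 s1 s2 M10 M1'] := nz_facts hs M0 M1 Mm1.
apply: (mulfI two); rewrite (common2 hs) //.
have ha : (-1) ^+ h = -1 :> K by rewrite hr exprS exprM sqrrN !expr1n mulr1.
have h2s : (2 * s) ^+ h = - (s * M ^+ r).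
  rewrite exprMn {2}hr exprS exprM hs (exprNn M).
  transitivity (s * (2 ^+ h * (-1) ^+ r) * M ^+ r); first by ring.
  by rewrite h2; ring.
have hc : M ^+ h = - (- M) ^+ h by rewrite exprNn ha mulN1r opprK.
have hen : (- M) ^+ h = - (M * (M ^+ r * M ^+ r)).
  by rewrite exprNn ha mulN1r hr exprS exprM expr2 -exprMn.
have n0 : M ^+ r != 0 by rewrite expf_neq0.
have hni : (M ^+ r)^-1 = - (- M) ^+ h * M * M ^+ r.
  apply: (mulfI n0); rewrite mulfV // hen opprK.
  have -> : M ^+ r * (M * (M ^+ r * M ^+ r) * M * M ^+ r) = (M * (M ^+ r * M ^+ r)) ^+ 2.
    by rewrite expr2; ring.
  by rewrite -sqrrN -hen; case: he => ->; rewrite ?expr1n ?sqrrN ?expr1n.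
rewrite ha h2s hc exprS invrN mulrN -mulNr invfM hni.
move: he n0; set e := (- M) ^+ h; set n := M ^+ r; clearbody e n => he n0.
have hM : M = - s ^+ 2 by rewrite hs opprK.
move: M1' M10; rewrite hM => M1' M10.
case: he => ->; field; by rewrite ?M1' ?M10 ?s1 ?s2 ?two ?s0.
Qed.


Lemma i_facts (i : K) : i ^+ 2 = -1 -> 1 + i != 0 /\ 1 - i != 0.
Proof.
move=> hi; have two := two_neq0.
have H : forall z : K, z ^+ 2 = -1 -> 1 + z != 0.
  move=> z hz; apply/eqP => hz0.
  have zm : z = -1 by apply/eqP; rewrite -addr_eq0 addrC hz0.
  move: hz; rewrite zm sqrrN expr1n => /eqP.
  rewrite -subr_eq0 opprK; exact/negP.
split; first exact: H.
by apply: H; rewrite sqrrN.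
Qed.

Lemma two_pow_even (i : K) r : i ^+ 2 = -1 -> h = (2 * r)%N -> 2 ^+ h * (-1) ^+ r = 1 :> K.
Proof.
move=> hi hr; have [i1 i2] := i_facts hi.
have ih : i ^+ h = (-1) ^+ r by rewrite hr exprM hi.
have ah : (-1) ^+ h = 1 :> K by rewrite hr exprM sqrrN !expr1n.
have := frob1 i; rewrite (sp_eq i) (sp_eq (1 + i)) hi.
have -> : (1 + i) ^+ 2 = 2 * i by rewrite expr2 mulrDl !mulrDr mul1r mulr1 -expr2 hi; ring.
rewrite exprMn ih ah mul1r => E.
by apply: (mulIf i1); rewrite mul1r -{2}E.
Qed.

Lemma two_pow_odd (i : K) r : i ^+ 2 = -1 -> h = (2 * r).+1%N -> 2 ^+ h * (-1) ^+ r = -1 :> K.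
Proof.
move=> hi hr; have [i1 i2] := i_facts hi.
have ih : i ^+ h = (-1) ^+ r * i by rewrite hr exprSr exprM hi.
have ah : (-1) ^+ h = -1 :> K by rewrite hr exprS exprM sqrrN !expr1n mulr1.
have := frob1 i; rewrite (sp_eq i) (sp_eq (1 + i)) hi.
have -> : (1 + i) ^+ 2 = 2 * i by rewrite expr2 mulrDl !mulrDr mul1r mulr1 -expr2 hi; ring.
rewrite exprMn ih ah => E.
apply: (mulIf i2).
transitivity (- (2 ^+ h * ((-1) ^+ r * i) * (1 + i))).
  have -> : 2 ^+ h * ((-1) ^+ r * i) * (1 + i) = 2 ^+ h * (-1) ^+ r * (i + i ^+ 2) by ring.
  by rewrite hi; ring.
by rewrite E; ring.
Qed.

End Core.


Section Fp.
Variable p : nat.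
Hypothesis pp : prime p.
Hypothesis op : odd p.
Let h := (p %/ 2)%N.

Lemma pchar_p : p \in [pchar 'F_p]. Proof. exact: pchar_Fp. Qed.

Lemma fermat (a : 'F_p) : a != 0 -> a ^+ (2 * h) = 1.
Proof.
move=> a0.
have hp : (p = (2 * h).+1)%N by rewrite /h; clear -op; lia.
have E : a ^+ (2 * h).+1 = a.
  by rewrite -hp; have := expf_card a; rewrite card_Fp.
rewrite exprS in E.
by apply: (mulfI a0); rewrite mulr1.
Qed.

Lemma natFp_neq0 n : (0 < n < p)%N -> (n%:R : 'F_p) != 0.
Proof.
move=> /andP[n0 np]; rewrite -(dvdn_pcharf pchar_p); apply/negP=> /dvdn_leq.
by move=> /(_ n0); rewrite leqNgt np.
Qed.

Lemma euler_sq (a : 'F_p) : a != 0 -> (exists b, b ^+ 2 = a) -> a ^+ h = 1.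
Proof.
move=> a0 [b hb]; rewrite -hb -exprM; apply: fermat.
by apply: contra a0 => /eqP b0; rewrite -hb b0 expr0n.
Qed.

Lemma euler_nsq (a : 'F_p) : a != 0 -> ~ (exists b, b ^+ 2 = a) -> a ^+ h = -1.
Proof.
move=> a0 nsq.
have h0 : (0 < h)%N by rewrite /h; have := prime_gt1 pp; clear -op; lia.
have E : (a ^+ h - 1) * (a ^+ h + 1) = 0.
  by rewrite -subr_sqr expr1n -exprM mulnC fermat // subrr.
move: E => /eqP; rewrite mulf_eq0 => /orP[]; last first.
  by rewrite addr_eq0 => /eqP.
rewrite subr_eq0 => /eqP ah; exfalso.
pose rs := a :: [seq (i%:R : 'F_p) ^+ 2 | i <- iota 1 h].
have := @max_poly_roots _ ('X^h - 1) rs.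
rewrite size_Xn_sub_1 // /rs /= size_map size_iota ltnn => H; suff : false by []; apply: H.
- by rewrite -size_poly_eq0 size_Xn_sub_1.
- apply/andP; split; first by rewrite /root !hornerE ah subrr.
  apply/allP => x /mapP [i]; rewrite mem_iota => /andP[i1 i2] ->.
  rewrite /root !hornerE -exprM fermat ?subrr //.
  apply: natFp_neq0; rewrite i1 /=; rewrite /h in i2; clear -i2 op; lia.
- rewrite /= andbC; apply/andP; split.
    rewrite map_inj_in_uniq ?iota_uniq // => i j.
    rewrite !mem_iota => /andP[i1 i2] /andP[j1 j2] /eqP.
    rewrite -subr_eq0 subr_sqr mulf_eq0 => /orP[].
      wlog ij : i j i1 i2 j1 j2 / (j <= i)%N.
        move=> H; case: (leqP j i) => [|/ltnW] ji; first by apply: H.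
        by move=> e; apply/esym; apply: H => //; rewrite -opprB oppr_eq0.
      rewrite -natrB // -(dvdn_pcharf pchar_p) => /dvdn_leq.
      case: (ltnP j i) => [ji'|]; last by move=> ij'; move: ij ij'; clear; lia.
      rewrite subn_gt0 => /(_ ji'); rewrite /h in i2 j2; clear -i2 j2 op ji'; lia.
    rewrite -natrD -(dvdn_pcharf pchar_p) => /dvdn_leq.
    rewrite /h in i2 j2; clear -i1 i2 j2 op; lia.
  apply/mapP => [[i _ ei]]; apply: nsq; by exists (i%:R).
Qed.

Definition phi (x : rat) : 'F_p := ratr x.

Lemma intFp_eq0 (z : int) : ((z%:~R : 'F_p) == 0) = (p %| `|z|)%N.
Proof.
case: z => n.
  by rewrite -pmulrn (dvdn_pcharf pchar_p).
by rewrite NegzE mulrNz oppr_eq0 -pmulrn (dvdn_pcharf pchar_p).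
Qed.

Lemma in_ZpE x : in_Zp p x = ~~ (p %| `|denq x|)%N.
Proof. by rewrite /in_Zp dvdzE. Qed.

Lemma rep x (a b : int) : ~~ (p %| `|b|)%N -> x * b%:~R = a%:~R ->
  in_Zp p x /\ phi x = a%:~R / b%:~R.
Proof.
move=> pb hx.
have b0 : b != 0 by apply: contraNneq pb => ->; rewrite dvdn0.
have E : (numq x * b = a * denq x)%R.
  apply/eqP; rewrite -(eqr_int rat) !intrM numqE -hx; apply/eqP; ring.
have pd : ~~ (p %| `|denq x|)%N.
  apply/negP => pd.
  have : (p %| `|numq x| * `|b|)%N by rewrite -abszM E abszM dvdn_mull.
  rewrite Euclid_dvdM // (negPf pb) orbF => pn.
  have := coprime_num_den x; rewrite /coprime => /eqP g1.
  have : (p %| gcdn `|numq x| `|denq x|)%N by rewrite dvdn_gcd pn pd.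
  by rewrite g1 dvdn1 => /eqP p1; move: pp; rewrite p1.
split; first by rewrite in_ZpE.
have dF : ((denq x)%:~R : 'F_p) != 0 by rewrite intFp_eq0.
have bF : (b%:~R : 'F_p) != 0 by rewrite intFp_eq0.
rewrite /phi /ratr; apply/eqP; rewrite eqr_div // -!intrM E.
by rewrite mulrC.
Qed.

Definition good x u := in_Zp p x /\ phi x = u.

Lemma goodE x : good x (phi x) -> phi x = (numq x)%:~R / (denq x)%:~R.
Proof. by []. Qed.

Lemma good_denq x : good x (phi x) -> ~~ (p %| `|denq x|)%N.
Proof. by move=> [hx _]; rewrite -in_ZpE. Qed.

Lemma goodM x y u v : good x u -> good y v -> good (x * y) (u * v).
Proof.
move=> [hx <-] [hy <-].
have pb : ~~ (p %| `|(denq x * denq y)%R|)%N.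
  by rewrite abszM Euclid_dvdM // negb_or -!in_ZpE hx hy.
have eq : x * y * (denq x * denq y)%:~R = (numq x * numq y)%:~R.
  by rewrite !intrM !numqE; ring.
have [H E] := rep pb eq.
by split => //; rewrite E !intrM /phi /ratr mulf_div.
Qed.

Lemma goodD x y u v : good x u -> good y v -> good (x + y) (u + v).
Proof.
move=> [hx <-] [hy <-].
have pb : ~~ (p %| `|(denq x * denq y)%R|)%N.
  by rewrite abszM Euclid_dvdM // negb_or -!in_ZpE hx hy.
have eq : (x + y) * (denq x * denq y)%:~R = (numq x * denq y + numq y * denq x)%:~R.
  by rewrite intrD !intrM !numqE; ring.
have [H E] := rep pb eq.
split => //; rewrite E /phi /ratr addf_div ?intFp_eq0 -?in_ZpE //.
by rewrite intrD !intrM [_ * (denq x)%:~R]mulrC.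
Qed.

Lemma goodN x u : good x u -> good (- x) (- u).
Proof.
move=> [hx <-].
have pb : ~~ (p %| `|denq x|)%N by rewrite -in_ZpE.
have eq : - x * (denq x)%:~R = (- numq x)%:~R by rewrite mulNr intrN numqE.
have [H E] := rep pb eq.
by split => //; rewrite E /phi /ratr intrN mulNr.
Qed.

Lemma goodV x u : good x u -> u != 0 -> good (x^-1) (u^-1).
Proof.
move=> [hx <-] u0.
have n0 : ~~ (p %| `|numq x|)%N.
  rewrite -intFp_eq0; apply: contra u0 => /eqP n0.
  by rewrite /phi /ratr n0 mul0r.
have x0 : x != 0.
  by apply: contra u0 => /eqP ->; rewrite /phi /ratr (_ : numq 0 = 0) // mul0r.
have eq : x^-1 * (numq x)%:~R = (denq x)%:~R by rewrite numqE mulrA mulVf ?mul1r.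
have [H E] := rep n0 eq.
by split => //; rewrite E /phi /ratr invf_div.
Qed.

Lemma good_nat n : good n%:R n%:R.
Proof.
have pb : ~~ (p %| `|1%:Z|)%N.
  by rewrite absz1 dvdn1; apply/negP => /eqP p1; move: pp; rewrite p1.
have eq : n%:R * (1%:Z)%:~R = (n%:Z)%:~R :> rat by rewrite mulr1 -pmulrn.
have [H E] := rep pb eq.
by split => //; rewrite E divr1 -pmulrn.
Qed.

Lemma good1 : good 1 1. Proof. exact: (good_nat 1). Qed.

Lemma goodX x u n : good x u -> good (x ^+ n) (u ^+ n).
Proof.
move=> gx; elim: n => [|n IH]; first by rewrite !expr0; exact: good1.
by rewrite !exprS; apply: goodM.
Qed.

Lemma good_sum m n (F : nat -> rat) (G : nat -> 'F_p) :
  (forall i, good (F i) (G i)) ->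
  good (\sum_(m <= i < n) F i) (\sum_(m <= i < n) G i).
Proof.
move=> H; apply: (big_ind2 good) => //; first exact: (good_nat 0).
by move=> ? ? ? ?; apply: goodD.
Qed.

Lemma good_cong x y u : good x u -> good y u -> congp p x y.
Proof.
move=> gx gy.
have [hz z0] := goodD gx (goodN gy).
rewrite subrr in z0.
set z := x + - y in hz z0.
have pn : (p %| `|numq z|)%N.
  move: z0; rewrite /phi /ratr => /eqP; rewrite mulf_eq0 invr_eq0 !intFp_eq0 => /orP[] // pd.
  by move: hz; rewrite in_ZpE pd.
have [c hc] : exists c : int, numq z = c * p%:Z.
  by exists ((numq z) %/ p%:Z)%Z; rewrite divzK // dvdzE.
rewrite /congp.
have pb : ~~ (p %| `|denq z|)%N by rewrite -in_ZpE.
have p0 : (p%:R : rat) != 0 by rewrite pnatr_eq0 -lt0n prime_gt0.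
have eq : z / p%:R * (denq z)%:~R = c%:~R.
  by rewrite mulrAC -numqE hc intrM -pmulrn mulfK.
by have [H _] := rep pb eq.
Qed.


Lemma good_leg x u : good x u -> good (legendreQ p x) (u ^+ h).
Proof.
move=> [hx hu]; rewrite /legendreQ -/(phi x) hu.
have h0 : (0 < h)%N by rewrite /h; have := prime_gt1 pp; clear -op; lia.
case: eqP => [->|/eqP u0]; first by rewrite expr0n gtn_eqF //; exact: (good_nat 0).
case: existsP => [[b /eqP hb]|nb].
  by rewrite euler_sq //; [exact: good1 | exists b].
rewrite euler_nsq //; first exact: goodN good1.
by move=> [b hb]; apply: nb; exists b; apply/eqP.
Qed.

Lemma good_def x : in_Zp p x -> good x (phi x). Proof. by []. Qed.

End Fp.

Lemma root_of_factor (L : fieldType) (q Q : {poly L}) rs :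
  Q %= \prod_(z <- rs) ('X - z%:P) -> q %| Q -> (1 < size q)%N -> exists z, root q z.
Proof.
move=> hQ hq sq; move: hq; rewrite (eqp_dvdr _ hQ) => /dvdp_prod_XsubC [m hm].
case E: (mask m rs) hm => [|z zs] hm.
  by move: (eqp_size hm); rewrite big_nil size_poly1 => e; move: sq; rewrite e.
exists z; rewrite (eqp_root hm) big_cons rootM; apply/orP; left.
by rewrite root_XsubC.
Qed.

Lemma ext p (pp : prime p) (mu : 'F_p) : exists (L : fieldType) (iota : {rmorphism 'F_p -> L}) (s i : L),
  [/\ p \in [pchar L], s ^+ 2 = - iota mu & i ^+ 2 = -1].
Proof.
pose P : {poly 'F_p} := ('X^2 + mu%:P) * ('X^2 + 1%:P).
have nzP : P != 0.
  by rewrite mulf_neq0 // monic_neq0 // monicXnaddC.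
have [L hL] := FinSplittingFieldFor nzP; case: hL => rs hP _.
have pcharL : p \in [pchar L] by rewrite pchar_lalg pchar_Fp.
have mP : map_poly (in_alg L) P = ('X^2 + (in_alg L mu)%:P) * ('X^2 + 1%:P).
  by rewrite rmorphM !rmorphD /= !map_polyXn !map_polyC /= scale1r.
rewrite mP in hP.
have [s hs] : exists s, root ('X^2 + (in_alg L mu)%:P) s.
  by apply: root_of_factor hP (dvdp_mulIl _ _) _; rewrite size_XnaddC.
have [i hi] : exists i, root ('X^2 + 1%:P : {poly L}) i.
  by apply: root_of_factor hP (dvdp_mulIr _ _) _; rewrite size_XnaddC.
exists L, (in_alg L), s, i; split => //.
- by move: hs; rewrite /root !hornerE addr_eq0 => /eqP.
- by move: hi; rewrite /root !hornerE addr_eq0 => /eqP.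
Qed.

Unset Implicit Arguments.

Theorem corollary2p10 (p : nat) (m : rat) :
  prime p -> odd p -> in_Zp p m ->
  ~ congp p m 0 -> ~ congp p m 1 -> ~ congp p m (-1) ->
  congp p (\sum_(0 <= k < (p %/ 4).+1) ('C(4 * k, 2 * k))%:R
              * (- (m / (4 * (m - 1) ^+ 2))) ^+ k)
          ((m + 1)^-1 * legendreQ p (m - 1)
             * (m * legendreQ p m + legendreQ p (-1)))
  /\
  ((4 %| p.-1)%N ->
    congp p (\sum_(0 <= k < (p %/ 4).+1) ('C(4 * k, 2 * k))%:R
                * (- ((m - 1) ^+ 2 / (64 * m))) ^+ k)
            ((m + 1)^-1 * (m + legendreQ p m) * m ^+ (p.-1 %/ 4)))
  /\
  ((4 %| p - 3)%N ->
    congp p (\sum_(0 <= k < (p %/ 4).+1) ('C(4 * k, 2 * k))%:R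
                * (- ((m - 1) ^+ 2 / (64 * m))) ^+ k)
            ((m + 1)^-1 * (legendreQ p m + 1) * m ^+ (p.+1 %/ 4))).
Proof.
move=> pp op hm nm0 nm1 nmm1.
set h := (p %/ 2)%N.
pose mu := phi p m.
have gm : good m mu by [].
clearbody mu.
have g1 : good 1 (1 : 'F_p) := good1 pp.
have g0 : good 0 (0 : 'F_p) := good_nat pp 0.
have mu0 : mu != 0.
  by apply/eqP => e; apply: nm0; apply: (good_cong pp gm); rewrite -e in g0.
have mu1 : mu != 1.
  by apply/eqP => e; apply: nm1; apply: (good_cong pp gm); rewrite -e in g1.
have gN1 : good (-1) (-1 : 'F_p) := goodN pp g1.
have mum1 : mu != -1.
  by apply/eqP => e; apply: nmm1; apply: (good_cong pp gm); rewrite -e in gN1.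
have gm1 : good (m - 1) (mu - 1) := goodD pp gm (goodN pp g1).
have gp1 : good (m + 1) (mu + 1) := goodD pp gm g1.
have mu10 : mu - 1 != 0 by rewrite subr_eq0.
have mup10 : mu + 1 != 0 by rewrite -[1]opprK subr_eq0.
have two : (2 : 'F_p) != 0.
  have p2 : p != 2%N by apply: contraTneq op => ->.
  have p3 : (2 < p)%N by rewrite ltn_neqAle eq_sym p2 prime_gt1.
  by apply: natFp_neq0.
have four : (4 : 'F_p) != 0.
  by have := mulf_neq0 two two; rewrite -natrM.
have s64 : (64 : 'F_p) != 0.
  by have := mulf_neq0 (mulf_neq0 four four) four; rewrite -!natrM.
have [L [iota [s [i [pL hs hi]]]]] := ext pp mu.
have fermatL : forall a : 'F_p, a != 0 -> a ^+ h * a ^+ h = 1.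
  by move=> a a0; rewrite -exprD addnn -mul2n fermat.
have eulerL : forall a : 'F_p, a != 0 -> a ^+ h = 1 \/ a ^+ h = -1.
  move=> a a0; case: (boolP [exists b : 'F_p, b ^+ 2 == a]) => [/existsP [b /eqP hb]|nb].
    by left; apply: euler_sq => //; exists b.
  right; apply: euler_nsq => // [[b hb]]; move/negP: nb; apply; apply/existsP; exists b; exact/eqP.

set M := iota mu.
have M0 : M != 0 by rewrite fmorph_eq0.
have M1 : M != 1 by rewrite /M -(rmorph1 iota) (inj_eq (fmorph_inj iota)).
have Mm1 : M != -1 by rewrite /M -(rmorph1 iota) -rmorphN (inj_eq (fmorph_inj iota)).
have he : (- M) ^+ h = 1 \/ (- M) ^+ h = -1.
  have : - mu != 0 by rewrite oppr_eq0.
  move=> /eulerL [] e; [left | right]; by rewrite /M -rmorphN -rmorphXn e ?rmorphN rmorph1.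
have G1 : good (\sum_(0 <= k < (p %/ 4).+1) ('C(4 * k, 2 * k))%:R
              * (- (m / (4 * (m - 1) ^+ 2))) ^+ k)
   (\sum_(0 <= k < (p %/ 4).+1) ('C(4 * k, 2 * k))%:R
              * (- (mu / (4 * (mu - 1) ^+ 2))) ^+ k).
  apply: (good_sum pp) => k; apply: (goodM pp (good_nat pp _)).
  apply: (goodX pp); apply: (goodN pp); apply: (goodM pp gm); apply: (goodV pp).
    exact: (goodM pp (good_nat pp 4) (goodX pp _ gm1)).
  by rewrite mulf_neq0 // expf_neq0.
have GR1 : good ((m + 1)^-1 * legendreQ p (m - 1) * (m * legendreQ p m + legendreQ p (-1)))
   ((mu + 1)^-1 * (mu - 1) ^+ h * (mu * mu ^+ h + (-1) ^+ h)).
  apply: (goodM pp); first apply: (goodM pp); first exact: (goodV pp gp1).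
    exact: (good_leg pp op gm1).
  apply: (goodD pp); first apply: (goodM pp gm); exact: (good_leg pp op).
have E1 : \sum_(0 <= k < (p %/ 4).+1) ('C(4 * k, 2 * k))%:R
              * (- (mu / (4 * (mu - 1) ^+ 2))) ^+ k
   = (mu + 1)^-1 * (mu - 1) ^+ h * (mu * mu ^+ h + (-1) ^+ h).
  apply: (fmorph_inj iota).
  rewrite rmorph_sum /=.
  rewrite (eq_bigr (fun k => ('C(4 * k, 2 * k))%:R * (- (M / (4 * (M - 1) ^+ 2))) ^+ k)); last first.
    move=> k _; rewrite !(rmorphM iota) !(rmorphXn iota) !(rmorph_nat iota) (rmorphN iota) (fmorph_div iota).
    by rewrite (rmorphM iota) (rmorphXn iota) (rmorphB iota) (rmorph1 iota) (rmorph_nat iota).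
  rewrite !(rmorphM iota) (fmorphV iota) !(rmorphD iota) !(rmorphXn iota) (rmorphB iota) (rmorphN iota) !(rmorphM iota) !(rmorph1 iota) -/M (rmorphXn iota) -/M.
  apply: (core1 pL op hs) => //.
  have := fermatL _ mu10; move/(congr1 iota).
  by rewrite (rmorphM iota) (rmorphXn iota) (rmorphB iota) !(rmorph1 iota).
split.
  by apply: (good_cong pp G1); rewrite E1.
have m0 : 64 * mu != 0 by rewrite mulf_neq0.
have G2 : good (\sum_(0 <= k < (p %/ 4).+1) ('C(4 * k, 2 * k))%:R
                * (- ((m - 1) ^+ 2 / (64 * m))) ^+ k)
   (\sum_(0 <= k < (p %/ 4).+1) ('C(4 * k, 2 * k))%:R
                * (- ((mu - 1) ^+ 2 / (64 * mu))) ^+ k).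
  apply: (good_sum pp) => k; apply: (goodM pp (good_nat pp _)).
  apply: (goodX pp); apply: (goodN pp); apply: (goodM pp (goodX pp _ gm1)); apply: (goodV pp) => //.
  exact: (goodM pp (good_nat pp 64) gm).
have I2 : iota (\sum_(0 <= k < (p %/ 4).+1) ('C(4 * k, 2 * k))%:R
                * (- ((mu - 1) ^+ 2 / (64 * mu))) ^+ k) =
   \sum_(0 <= k < (p %/ 4).+1) ('C(4 * k, 2 * k))%:R
                * (- ((M - 1) ^+ 2 / (64 * M))) ^+ k.
  rewrite rmorph_sum /=; apply: eq_bigr => k _.
  rewrite !(rmorphM iota) !(rmorphXn iota) !(rmorph_nat iota) (rmorphN iota) (fmorph_div iota).
  by rewrite (rmorphXn iota) (rmorphM iota) (rmorphB iota) (rmorph1 iota) (rmorph_nat iota).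
split.
  move=> /dvdnP [c hc].
  have hr : h = (2 * (p.-1 %/ 4))%N.
    rewrite /h; have := prime_gt0 pp; clear -hc; lia.
  apply: (good_cong pp G2).
  have -> : \sum_(0 <= k < (p %/ 4).+1) ('C(4 * k, 2 * k))%:R
                * (- ((mu - 1) ^+ 2 / (64 * mu))) ^+ k =
      (mu + 1)^-1 * (mu + mu ^+ h) * mu ^+ (p.-1 %/ 4).
    apply: (fmorph_inj iota); rewrite I2.
    rewrite !(rmorphM iota) (fmorphV iota) !(rmorphD iota) !(rmorphXn iota) (rmorph1 iota) -/M.
    exact: (core2 pL op hr hs M0 M1 Mm1 (two_pow_even pL op hi hr) he).
  apply: (goodM pp); first apply: (goodM pp); first exact: (goodV pp gp1).
    exact: (goodD pp gm (good_leg pp op gm)).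
  exact: (goodX pp).
move=> /dvdnP [c hc].
have p3 : (2 < p)%N.
  have p2 : p != 2%N by apply: contraTneq op => ->.
  by rewrite ltn_neqAle eq_sym p2 prime_gt1.
have hr : h = (2 * (p.-1 %/ 4)).+1%N.
  rewrite /h; clear -hc p3; lia.
have hr1 : (p.+1 %/ 4 = (p.-1 %/ 4).+1)%N.
  clear -hc p3; lia.
apply: (good_cong pp G2).
have -> : \sum_(0 <= k < (p %/ 4).+1) ('C(4 * k, 2 * k))%:R
              * (- ((mu - 1) ^+ 2 / (64 * mu))) ^+ k =
    (mu + 1)^-1 * (mu ^+ h + 1) * mu ^+ (p.+1 %/ 4).
  apply: (fmorph_inj iota); rewrite I2 hr1.
  rewrite !(rmorphM iota) (fmorphV iota) !(rmorphD iota) !(rmorphXn iota) !(rmorph1 iota) -/M.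
  exact: (core3 pL op hr hs M0 M1 Mm1 (two_pow_odd pL op hi hr) he).
apply: (goodM pp); first apply: (goodM pp); first exact: (goodV pp gp1).
  exact: (goodD pp (good_leg pp op gm) g1).
exact: (goodX pp).
Qed.
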